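(* Let $(X,Y,Z,W)$ be a solution of system (S) on an interval $(-\infty,t_{max})$. Assume $\lim_{t\to-\infty}(X,Y,Z,W)(t)=(0,0,1,0)$ and $\left|\int_{-\infty}^{T_0}X(t)\,dt\right|<\infty$ for some $T_0$ in the interval. Normalize $g$ so that $g(t)=\lambda e^{\int_{-\infty}^tX(\tau)d\tau}$ with $\lambda>0$, and suppose $Y(t_0)>0$ for some $t_0$. Then $\mathcal L$ is strictly increasing, $\mathcal L>0$, and $0<\int_{-\infty}^{T_0}\mathcal L(t)\,dt<\infty$.
   Context: Fix a positive integer $d$ and a real number $q$. Put $A_2=d(d+2)$ and $A_3=\tfrac14 d(d+2)^2q^2$. System (S) is $$X'=X(dX^2+Z^2-1)+\tfrac{A_2}{d}Y^2-2\tfrac{A_3}{d}W^2,\qquad Y'=Y(dX^2+Z^2-X),$$ $$Z'=Z(dX^2+Z^2-1)+A_3W^2,\qquad W'=W(dX^2+Z^2-2X+Z).$$ For a solution, $g$ denotes a solution of $g'=gX$, determined up to a multiplicative constant, and $\mathcal L=gY$. When $\int_{-\infty}^{T}X\,dt$ is finite, $\lambda:=\lim_{t\to-\infty}g(t)$ exists, and the normalization of $g$ is fixed by choosing $\lambda$. *)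

(* Defs.v *)
From Stdlib Require Import Reals.
Open Scope R_scope.

(* The maximal interval (-oo, tmax); tmax = None encodes tmax = +oo. *)
Definition in_dom (tmax : option R) (t : R) : Prop :=
  match tmax with None => True | Some b => t < b end.

Definition A2 (d : nat) : R := INR d * (INR d + 2).
Definition A3 (d : nat) (q : R) : R := / 4 * INR d * (INR d + 2) ^ 2 * q ^ 2.

Definition solves_S (d : nat) (q : R) (tmax : option R)
  (X Y Z W : R -> R) : Prop :=
  forall t, in_dom tmax t ->
    derivable_pt_lim X t
      (X t * (INR d * X t ^ 2 + Z t ^ 2 - 1) + A2 d / INR d * Y t ^ 2
       - 2 * (A3 d q / INR d) * W t ^ 2) /\
    derivable_pt_lim Y t (Y t * (INR d * X t ^ 2 + Z t ^ 2 - X t)) /\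
    derivable_pt_lim Z t
      (Z t * (INR d * X t ^ 2 + Z t ^ 2 - 1) + A3 d q * W t ^ 2) /\
    derivable_pt_lim W t (W t * (INR d * X t ^ 2 + Z t ^ 2 - 2 * X t + Z t)).

Definition lim_minus_infty (f : R -> R) (l : R) : Prop :=
  forall eps, 0 < eps -> exists M, forall t, t < M -> Rabs (f t - l) < eps.

Definition improper_int_lower (f : R -> R) (T I : R) : Prop :=
  (forall a, a <= T -> inhabited (Riemann_integrable f a T)) /\
  (forall eps, 0 < eps -> exists M, forall a (pr : Riemann_integrable f a T),
      a < M -> a <= T -> Rabs (RiemannInt pr - I) < eps).

(* Main.v *)
Require Import Defs.
From Stdlib Require Import Reals Lra Psatz Classical.
From Coquelicot Require Import Coquelicot.
Open Scope R_scope.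

Section Aux.
Variable tm : option R.
Let D := in_dom tm.

Lemma dom_down s t : D t -> s <= t -> D s.
Proof. unfold D, in_dom; destruct tm; auto; lra. Qed.

Lemma dom_loc t : D t -> locally t D.
Proof.
  unfold D, in_dom; destruct tm as [b|].
  - intros Ht. assert (Hp : 0 < b - t) by lra.
    exists (mkposreal _ Hp). intros y Hy. cbn in Hy. unfold AbsRing_ball, abs, minus, plus, opp in Hy; simpl in Hy.
    apply Rabs_lt_between in Hy. simpl in Hy. lra.
  - intros _. exists (mkposreal 1 Rlt_0_1). auto.
Qed.

Lemma cont_ex (f : R -> R) a b : (forall z, D z -> continuous f z) -> D a -> D b -> ex_RInt f a b.
Proof.
  intros Hc Ha Hb. apply (@ex_RInt_continuous R_CompleteNormedModule). intros z Hz. apply Hc.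
  apply dom_down with (Rmax a b). unfold Rmax; destruct Rle_dec; auto. lra.
Qed.

Lemma is_derive_eq (f : R -> R) x l l' : is_derive f x l -> l = l' -> is_derive f x l'.
Proof. intros H <-; exact H. Qed.

Lemma derK (h : R -> R) a u : (forall z, D z -> continuous h z) -> D a -> D u ->
  is_derive (fun v => RInt h a v) u (h u).
Proof.
  intros Hc Ha Hu. apply is_derive_RInt with (a := a); [|apply Hc; auto].
  apply filter_imp with D; [|apply dom_loc; auto].
  intros v Hv. apply RInt_correct. apply cont_ex; auto.
Qed.

Lemma eq0_of_small x : (forall eps, 0 < eps -> Rabs x < eps) -> x = 0.
Proof.
  intros H. destruct (Req_dec x 0) as [|Hn]; auto.
  specialize (H (Rabs x) (Rabs_pos_lt x Hn)). lra.
Qed.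

Lemma ode_exp (f h : R -> R) t0 t : (forall u, D u -> is_derive f u (f u * h u)) ->
  (forall u, D u -> continuous h u) -> D t0 -> D t ->
  f t = f t0 * exp (RInt h t0 t).
Proof.
  intros Hf Hc H0 Ht.
  set (phi := fun u => f u * exp (- RInt h t0 u)).
  assert (Hd : forall u, D u -> is_derive phi u 0).
  { intros u Hu. unfold phi.
    eapply is_derive_eq.
    - apply (is_derive_mult f (fun u => exp (- RInt h t0 u))).
      + apply Hf; auto.
      + apply (is_derive_comp exp (fun u => - RInt h t0 u)).
        * apply is_derive_exp.
        * apply (is_derive_opp (fun v => RInt h t0 v)). apply derK; auto.
      + intros; apply Rmult_comm.
    - unfold plus, mult, scal, opp; simpl. unfold mult; simpl. ring. }
  assert (Hm : exists c, Rmin t0 t <= c <= Rmax t0 t /\ phi t - phi t0 = 0 * (t - t0)).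
  { apply MVT_gen.
    - intros x Hx. apply Hd. apply dom_down with (Rmax t0 t); [|lra].
      unfold Rmax; destruct Rle_dec; auto.
    - intros x Hx. apply continuity_pt_filterlim. apply (@ex_derive_continuous R_AbsRing R_NormedModule).
      eexists. apply Hd. apply dom_down with (Rmax t0 t); [|lra].
      unfold Rmax; destruct Rle_dec; auto. }
  destruct Hm as [c [_ Hm]].
  unfold phi in Hm. rewrite RInt_point in Hm. unfold zero in Hm; simpl in Hm.
  rewrite Ropp_0, exp_0 in Hm.
  assert (E : f t * exp (- RInt h t0 t) = f t0) by lra.
  rewrite <- E, Rmult_assoc, <- exp_plus. replace (- RInt h t0 t + RInt h t0 t) with 0 by ring.
  rewrite exp_0; ring.
Qed.

Lemma imp_chasles (f : R -> R) s t Is It : (forall z, D z -> continuous f z) -> D s -> D t ->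
  improper_int_lower f s Is -> improper_int_lower f t It -> It = Is + RInt f s t.
Proof.
  intros Hc Hs Ht [_ Hs2] [_ Ht2].
  apply Rminus_diag_uniq. apply eq0_of_small. intros eps He.
  destruct (Hs2 (eps/2)) as [Ms HMs]; [lra|].
  destruct (Ht2 (eps/2)) as [Mt HMt]; [lra|].
  set (a := Rmin (Rmin Ms Mt) (Rmin s t) - 1).
  assert (Ha1 : a < Ms /\ a < Mt /\ a <= s /\ a <= t).
  { generalize (Rmin_l (Rmin Ms Mt) (Rmin s t)) (Rmin_r (Rmin Ms Mt) (Rmin s t))
      (Rmin_l Ms Mt) (Rmin_r Ms Mt) (Rmin_l s t) (Rmin_r s t). unfold a. lra. }
  destruct Ha1 as [H1 [H2 [H3 H4]]].
  assert (Da : D a) by (apply dom_down with s; auto).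
  assert (Es : ex_RInt f a s) by (apply cont_ex; auto).
  assert (Et : ex_RInt f a t) by (apply cont_ex; auto).
  assert (Est : ex_RInt f s t) by (apply cont_ex; auto).
  specialize (HMs a (ex_RInt_Reals_0 _ _ _ Es) H1 H3).
  specialize (HMt a (ex_RInt_Reals_0 _ _ _ Et) H2 H4).
  rewrite <- RInt_Reals in HMs, HMt.
  rewrite <- (RInt_Chasles f a s t Es Est) in HMt. unfold plus in HMt; simpl in HMt.
  apply Rabs_def2 in HMs. apply Rabs_def2 in HMt. apply Rabs_def1; lra.
Qed.

End Aux.

Theorem proposition2p2 (d : nat) (q : R) (tmax : option R)
  (X Y Z W g : R -> R) (lam T0 t0 : R) :
  (0 < d)%nat ->
  solves_S d q tmax X Y Z W ->
  lim_minus_infty X 0 -> lim_minus_infty Y 0 ->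
  lim_minus_infty Z 1 -> lim_minus_infty W 0 ->
  in_dom tmax T0 ->
  (exists IX, improper_int_lower X T0 IX) ->
  0 < lam ->
  (forall t, in_dom tmax t ->
     exists It, improper_int_lower X t It /\ g t = lam * exp It) ->
  in_dom tmax t0 -> 0 < Y t0 ->
  (forall s t, in_dom tmax s -> in_dom tmax t -> s < t ->
     g s * Y s < g t * Y t) /\
  (forall t, in_dom tmax t -> 0 < g t * Y t) /\
  (exists IL, improper_int_lower (fun t => g t * Y t) T0 IL /\ 0 < IL).
Proof.
  intros Hd Hsol HX HY HZ HW HT0 _ Hlam Hg Ht0 HYt0.
  set (D := in_dom tmax) in *.
  assert (Dpos : 0 < INR d) by (apply lt_0_INR; lia).
  set (k := fun t => INR d * X t ^ 2 + Z t ^ 2).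
  set (c := fun t => INR d * X t ^ 2 + Z t ^ 2 - X t).
  assert (dX : forall t, D t -> ex_derive X t).
  { intros t Ht. destruct (Hsol t Ht) as [h _]. eexists. apply is_derive_Reals, h. }
  assert (dZ : forall t, D t -> ex_derive Z t).
  { intros t Ht. destruct (Hsol t Ht) as [_ [_ [h _]]]. eexists. apply is_derive_Reals, h. }
  assert (dY : forall t, D t -> is_derive Y t (Y t * c t)).
  { intros t Ht. destruct (Hsol t Ht) as [_ [h _]]. apply is_derive_Reals, h. }
  assert (ck : forall t, D t -> continuous k t).
  { intros t Ht. apply (@ex_derive_continuous R_AbsRing R_NormedModule). unfold k.
    auto_derive. repeat split; auto. }
  assert (cc : forall t, D t -> continuous c t).
  { intros t Ht. apply (@ex_derive_continuous R_AbsRing R_NormedModule). unfold c.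
    auto_derive. repeat split; auto. }
  assert (cX : forall t, D t -> continuous X t).
  { intros t Ht. apply (@ex_derive_continuous R_AbsRing R_NormedModule). auto. }
  assert (k0 : forall t, 0 <= k t).
  { intros t; unfold k. assert (0 <= X t ^ 2) by nra. assert (0 <= Z t ^ 2) by nra. nra. }
  assert (HYf : forall t, D t -> Y t = Y t0 * exp (RInt c t0 t)).
  { intros t Ht. apply (ode_exp tmax); auto. }
  destruct (Hg t0 Ht0) as [I0 [HI0 Hg0]].
  set (K := fun t => RInt k t0 t).
  set (C := lam * exp I0 * Y t0).
  assert (Cpos : 0 < C) by (unfold C; apply Rmult_lt_0_compat; [apply Rmult_lt_0_compat|]; auto; apply exp_pos).
  set (Lf := fun t => C * exp (K t)).
  assert (HL : forall t, D t -> g t * Y t = Lf t).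
  { intros t Ht. destruct (Hg t Ht) as [It [HIt Hgt]].
    rewrite (imp_chasles tmax X t0 t I0 It cX Ht0 Ht HI0 HIt) in Hgt.
    rewrite Hgt, (HYf t Ht). unfold Lf, C, K.
    assert (E : RInt k t0 t = RInt X t0 t + RInt c t0 t).
    { rewrite <- (RInt_plus (V := R_CompleteNormedModule)); try (apply (cont_ex tmax); auto).
      apply RInt_ext. intros x _. unfold plus, k, c; simpl. ring. }
    rewrite E, !exp_plus. ring. }
  assert (exk : forall a b, D a -> D b -> ex_RInt k a b).
  { intros; apply (cont_ex tmax); auto. }
  assert (Kch : forall s t, D s -> D t -> K t = K s + RInt k s t).
  { intros s t Hs Ht. unfold K. rewrite <- (RInt_Chasles (V := R_CompleteNormedModule) k t0 s t); auto. }
  assert (Kmono : forall s t, D t -> s <= t -> K s <= K t).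
  { intros s t Ht Hst. assert (Hs : D s) by (apply (dom_down tmax) with t; auto).
    rewrite (Kch s t Hs Ht). assert (0 <= RInt k s t); [|lra].
    apply RInt_ge_0; auto. }
  assert (dK : forall u, D u -> is_derive K u (k u)).
  { intros u Hu. apply (derK tmax); auto. }
  assert (Kstrict : forall s t, D t -> s < t -> K s < K t).
  { intros s t Ht Hst. assert (Hs : D s) by (apply (dom_down tmax) with t; auto; lra).
    destruct (Rlt_or_le (K s) (K t)) as [|Hle]; auto. exfalso.
    assert (Kc : forall u, s <= u <= t -> K u = K s).
    { intros u Hu. assert (K s <= K u) by (apply Kmono; [apply (dom_down tmax) with t|]; auto; lra).
      assert (K u <= K t) by (apply Kmono; auto; lra). lra. }
    assert (Hloc : forall u (P : R -> Prop), s < u < t -> (forall v, s < v < t -> P v) -> locally u P).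
    { intros u P Hu HP. assert (Hp : 0 < Rmin (u - s) (t - u)) by (apply Rmin_glb_lt; lra).
      exists (mkposreal _ Hp). intros y Hy. cbn in Hy. unfold AbsRing_ball, abs, minus, plus, opp in Hy; simpl in Hy.
      apply Rabs_lt_between in Hy. generalize (Rmin_l (u - s) (t - u)) (Rmin_r (u - s) (t - u)). intros. apply HP. lra. }
    assert (kz : forall u, s < u < t -> X u = 0 /\ Z u = 0).
    { intros u Hu. assert (Du : D u) by (apply (dom_down tmax) with t; auto; lra).
      assert (E1 : Derive K u = k u) by (apply is_derive_unique, dK; auto).
      assert (E2 : Derive K u = 0).
      { apply is_derive_unique. apply (is_derive_ext_loc (fun _ => K s)).
        - apply Hloc; auto. intros v Hv. symmetry; apply Kc; lra.
        - apply (is_derive_const (K s) u). }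
      unfold k in E1. assert (0 <= X u ^ 2) by nra. assert (0 <= Z u ^ 2) by nra.
      split; apply Rsqr_0_uniq; unfold Rsqr; nra. }
    set (m := (s + t) / 2).
    assert (Hm : s < m < t) by (unfold m; lra).
    assert (Dm : D m) by (apply (dom_down tmax) with t; auto; lra).
    destruct (Hsol m Dm) as [hX [_ [hZ _]]].
    apply is_derive_Reals, is_derive_unique in hX. apply is_derive_Reals, is_derive_unique in hZ.
    assert (hX0 : Derive X m = 0).
    { apply is_derive_unique. apply (is_derive_ext_loc (fun _ => 0)).
      - apply Hloc; auto. intros v Hv. symmetry; apply kz; auto.
      - apply (is_derive_const 0 m). }
    assert (hZ0 : Derive Z m = 0).
    { apply is_derive_unique. apply (is_derive_ext_loc (fun _ => 0)).
      - apply Hloc; auto. intros v Hv. symmetry; apply kz; auto.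
      - apply (is_derive_const 0 m). }
    destruct (kz m Hm) as [Xm Zm].
    rewrite hX0, Xm, Zm in hX. rewrite hZ0, Zm in hZ.
    assert (Ym : 0 < Y m).
    { rewrite (HYf m Dm). apply Rmult_lt_0_compat; auto; apply exp_pos. }
    unfold A2 in hX. assert (E : A3 d q * W m ^ 2 = 0) by lra.
    assert (E' : INR d * (INR d + 2) / INR d * Y m ^ 2 = 0).
    { replace (2 * (A3 d q / INR d) * W m ^ 2) with (2 * (A3 d q * W m ^ 2) / INR d) in hX
        by (field; lra). rewrite E in hX. lra. }
    replace (INR d * (INR d + 2) / INR d) with (INR d + 2) in E' by (field; lra).
    nra. }
  assert (Lpos : forall t, 0 < Lf t) by (intros; unfold Lf; apply Rmult_lt_0_compat; auto; apply exp_pos).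
  assert (Lmono : forall s t, D t -> s < t -> Lf s < Lf t).
  { intros s t Ht Hst. unfold Lf. apply Rmult_lt_compat_l; auto. apply exp_increasing; auto. }
  split; [|split].
  { intros s t Hs Ht Hst. rewrite HL, HL; auto. }
  { intros t Ht. rewrite HL; auto. }
  assert (dL : forall u, D u -> is_derive Lf u (Lf u * k u)).
  { intros u Hu. unfold Lf. eapply is_derive_eq.
    - apply is_derive_scal. apply (is_derive_comp exp K).
      + apply is_derive_exp.
      + apply dK; auto.
    - unfold scal; simpl; unfold mult; simpl. ring. }
  assert (cL : forall u, D u -> continuous Lf u).
  { intros u Hu. apply (@ex_derive_continuous R_AbsRing R_NormedModule). eexists; apply dL; auto. }
  assert (cLk : forall u, D u -> continuous (fun t => Lf t * k t) u).
  { intros u Hu. apply (continuous_mult Lf k); auto. }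
  assert (exL : forall a b, D a -> D b -> ex_RInt Lf a b).
  { intros; apply (cont_ex tmax); auto. }
  destruct (HZ (/4)) as [M HM]; [lra|].
  set (M2 := Rmin (M - 1) T0).
  assert (HM2a : M2 < M) by (unfold M2; generalize (Rmin_l (M - 1) T0); lra).
  assert (HM2b : M2 <= T0) by (unfold M2; apply Rmin_r).
  assert (DM2 : D M2) by (apply (dom_down tmax) with T0; auto).
  assert (khalf : forall t, t < M -> 1/2 <= k t).
  { intros t Htm. specialize (HM t Htm). apply Rabs_def2 in HM. unfold k.
    assert (0 <= X t ^ 2) by nra. nra. }
  assert (Bnd1 : forall a, a <= M2 -> RInt Lf a M2 <= 2 * Lf M2).
  { intros a Ha. assert (Da : D a) by (apply (dom_down tmax) with M2; auto).
    assert (FTC : RInt (fun t => Lf t * k t) a M2 = Lf M2 - Lf a).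
    { apply is_RInt_unique. apply (is_RInt_derive (V := R_CompleteNormedModule) Lf).
      - intros x Hx. apply dL. apply (dom_down tmax) with (Rmax a M2); [|lra].
        unfold Rmax; destruct Rle_dec; auto.
      - intros x Hx. apply cLk. apply (dom_down tmax) with (Rmax a M2); [|lra].
        unfold Rmax; destruct Rle_dec; auto. }
    assert (Hle : RInt Lf a M2 <= RInt (fun t => 2 * (Lf t * k t)) a M2).
    { apply RInt_le; auto.
      - apply (cont_ex tmax); auto. intros z Hz.
        apply (continuous_scal_r 2 (fun t => Lf t * k t)). auto.
      - intros x Hx. specialize (khalf x ltac:(lra)). specialize (Lpos x). nra. }
    assert (Esc : RInt (fun t => 2 * (Lf t * k t)) a M2 = 2 * RInt (fun t => Lf t * k t) a M2).
    { exact (RInt_scal (V := R_CompleteNormedModule) (fun t => Lf t * k t) a M2 2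
        ltac:(apply (cont_ex tmax); auto)). }
    rewrite Esc in Hle.
    rewrite FTC in Hle. specialize (Lpos a). lra. }
  set (F := fun a => RInt Lf a T0).
  assert (Fch : forall a b, D a -> D b -> F a = RInt Lf a b + F b).
  { intros a b Ha Hb. unfold F. rewrite <- (RInt_Chasles (V := R_CompleteNormedModule) Lf a b T0); auto. }
  assert (Fmono : forall a b, a <= b -> b <= T0 -> F b <= F a).
  { intros a b Hab HbT. assert (Db : D b) by (apply (dom_down tmax) with T0; auto).
    assert (Da : D a) by (apply (dom_down tmax) with b; auto).
    rewrite (Fch a b Da Db). assert (0 <= RInt Lf a b); [|lra].
    apply RInt_ge_0; auto. intros x _; apply Rlt_le, Lpos. }
  set (B := 2 * Lf M2 + F M2).
  assert (FB : forall a, a <= T0 -> F a <= B).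
  { intros a Ha. assert (Da : D a) by (apply (dom_down tmax) with T0; auto).
    destruct (Rle_or_lt a M2) as [H|H].
    - rewrite (Fch a M2 Da DM2). specialize (Bnd1 a H). unfold B; lra.
    - assert (F a <= F M2) by (apply Fmono; lra). specialize (Lpos M2). unfold B; lra. }
  set (E := fun x => exists a, a <= T0 /\ x = F a).
  destruct (completeness E) as [IL [Hub Hlub]].
  { exists B. intros x [a [Ha ->]]. apply FB; auto. }
  { exists (F T0). exists T0. split; auto; lra. }
  assert (Fpos : 0 < F (T0 - 1)).
  { unfold F. apply RInt_gt_0; [lra| |].
    - intros; apply Lpos.
    - intros x Hx. apply cL. apply (dom_down tmax) with T0; auto; lra. }
  exists IL. split.
  2:{ assert (F (T0 - 1) <= IL) by (apply Hub; exists (T0 - 1); split; auto; lra). lra. }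
  split.
  - intros a Ha. constructor. apply ex_RInt_Reals_0.
    apply (ex_RInt_ext Lf). 
    + intros x Hx. symmetry. apply HL. apply (dom_down tmax) with T0; auto.
      generalize (Rmax_r a T0) (Rmax_l a T0). unfold Rmax in *; destruct Rle_dec; lra.
    + apply exL; auto. apply (dom_down tmax) with T0; auto.
  - intros eps He.
    destruct (classic (exists x, E x /\ IL - eps < x)) as [[x [[a0 [Ha0 ->]] Hx]]|Hn].
    + exists a0. intros a pr Ha HaT. rewrite <- RInt_Reals.
      assert (Da : D a) by (apply (dom_down tmax) with T0; auto).
      rewrite (RInt_ext _ Lf).
      2:{ intros x Hx2. apply HL. apply (dom_down tmax) with T0; auto.
          generalize (Rmax_r a T0) (Rmax_l a T0). unfold Rmax in *; destruct Rle_dec; lra. }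
      fold (F a). assert (F a0 <= F a) by (apply Fmono; lra).
      assert (F a <= IL) by (apply Hub; exists a; split; auto).
      apply Rabs_def1; lra.
    + exfalso. assert (IL <= IL - eps); [|lra].
      apply Hlub. intros x Ex. apply Rnot_lt_le. intros Hlt. apply Hn. exists x; auto.
Qed.
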